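(* (i) Let $h_1,h_2,h_3$ be smooth functions of $(u,u_x)$ and let $m=u-u_{xx}$. The function $$k=h_1(u,u_x)m+h_2(u,u_x)m^2+h_3(u,u_x)m^3$$ satisfies $\hat E_u(k)=0$ if and only if $$h_1=u_xk_1(u^2-u_x^2)+k_0\frac{u}{u^2-u_x^2},\qquad h_2=h_3=0,$$ where $k_1$ is an arbitrary function of one variable and $k_0$ is an arbitrary constant. (ii) Any function $k$ of this form is a total $x$-derivative: $$k=D_x\Big(\tfrac12K_1(u^2-u_x^2)+\tfrac12k_0\ln\Big(\frac{u-u_x}{u+u_x}\Big)+k_0x\Big),$$ where $K_1$ is a function with $K_1'=k_1$.
   Context: $D_x$ is the total $x$-derivative acting on functions of $x$, $u$ and $x$-derivatives of $u$. The Euler operator with respect to $u$ is $\hat E_u=\partial_u-D_x\partial_{u_x}+D_x^2\partial_{u_{xx}}-D_x^3\partial_{u_{xxx}}+\cdots$. Expressions are considered on open sets where they are defined (e.g. $u^2\neq u_x^2$). *)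

(* Defs.v *)
From Stdlib Require Import Reals List.
Import ListNotations.
From Coquelicot Require Import Coquelicot.
Open Scope R_scope.

(* partial derivatives of a function h(u,p), p standing for u_x *)
Definition pu (f : R -> R -> R) : R -> R -> R :=
  fun u p => Derive (fun t => f t p) u.
Definition pp (f : R -> R -> R) : R -> R -> R :=
  fun u p => Derive (fun t => f u t) p.

(* iterated partial derivative: true = d/du, false = d/dp *)
Fixpoint iterd (l : list bool) (f : R -> R -> R) : R -> R -> R :=
  match l with
  | nil => f
  | cons b l' => (if b then pu else pp) (iterd l' f)
  end.

Definition smooth_on (U : R -> R -> Prop) (f : R -> R -> R) : Prop :=
  forall (l : list bool) (u p : R), U u p ->
    ex_derive (fun t => iterd l f t p) u /\
    ex_derive (fun t => iterd l f u t) p /\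
    continuous (fun z : R * R => iterd l f (fst z) (snd z)) (u, p).

(* The four connected components of { (u,p) | u^2 <> p^2 }:
   b = true : s*u > |p| ; b = false : s*p > |u| ; with s = +1 or -1. *)
Definition sgn (s : bool) : R := if s then 1 else -1.
Definition cone (b s : bool) (u p : R) : Prop :=
  if b then sgn s * u > Rabs p else sgn s * p > Rabs u.

(* a jet point: j 0 = u, j 1 = u_x, j 2 = u_xx, ... *)
Definition jet := nat -> R.
Definition difffun := R -> jet -> R.

Definition upd (j : jet) (i : nat) (t : R) : jet :=
  fun n => if Nat.eqb n i then t else j n.

Definition pjet (i : nat) (F : difffun) : difffun :=
  fun x j => Derive (fun t => F x (upd j i t)) (j i).

Definition px (F : difffun) : difffun :=
  fun x j => Derive (fun t => F t j) x.

Definition TotD (F : difffun) : difffun :=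
  fun x j => px F x j + Series (fun i => j (S i) * pjet i F x j).

Definition Euler (F : difffun) : difffun :=
  fun x j => Series (fun i => (-1) ^ i * Nat.iter i TotD (pjet i F) x j).

Definition kfun (h1 h2 h3 : R -> R -> R) : difffun :=
  fun x j =>
    let m := j 0%nat - j 2%nat in
    h1 (j 0%nat) (j 1%nat) * m + h2 (j 0%nat) (j 1%nat) * m ^ 2
    + h3 (j 0%nat) (j 1%nat) * m ^ 3.

Definition h1form (k1 : R -> R) (k0 : R) : R -> R -> R :=
  fun u p => p * k1 (u ^ 2 - p ^ 2) + k0 * u / (u ^ 2 - p ^ 2).

Definition potential (K1 : R -> R) (k0 : R) : difffun :=
  fun x j =>
    / 2 * K1 (j 0%nat ^ 2 - j 1%nat ^ 2)
    + / 2 * k0 * ln (Rabs ((j 0%nat - j 1%nat) / (j 0%nat + j 1%nat)))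
    + k0 * x.

(* Main.v *)
Require Import Defs.
From Stdlib Require Import Reals Lia List Arith Lra.
From Coquelicot Require Import Coquelicot.
Open Scope R_scope.

Lemma series4 (a : nat -> R) : (forall i, (4 <= i)%nat -> a i = 0) -> Series a = a 0%nat + a 1%nat + a 2%nat + a 3%nat.
Proof.
intros H. apply is_series_unique. unfold is_series.
apply (filterlim_ext_loc (fun _ => a 0%nat + a 1%nat + a 2%nat + a 3%nat)).
- exists 3%nat. intros n Hn. induction n. lia. 
  destruct (Nat.eq_dec n 2). subst. rewrite !sum_Sn, sum_O. simpl. unfold plus; simpl. ring.
  rewrite sum_Sn, <- IHn by lia. rewrite (H (S n)) by lia. unfold plus; simpl. ring.
- apply filterlim_const.
Qed.

Definition xind (G : difffun) := forall t x j, G t j = G x j.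
Definition indep (N : nat) (G : difffun) :=
  forall x j j', (forall i, (i < N)%nat -> j i = j' i) -> G x j = G x j'.

Lemma upd_lt j i t n : n <> i -> upd j i t n = j n.
Proof. intros H. unfold upd. destruct (Nat.eqb_spec n i); [contradiction|reflexivity]. Qed.
Lemma upd_eq j i t : upd j i t i = t.
Proof. unfold upd. rewrite Nat.eqb_refl. reflexivity. Qed.

Lemma pjet_zero N G i x j : indep N G -> (N <= i)%nat -> pjet i G x j = 0.
Proof.
intros HG Hi. unfold pjet.
rewrite (Derive_ext _ (fun _ => G x j)). apply Derive_const.
intros t. apply HG. intros n Hn. apply upd_lt. lia.
Qed.

Lemma px_zero G x j : xind G -> px G x j = 0.
Proof.
intros HG. unfold px. rewrite (Derive_ext _ (fun _ => G x j)). apply Derive_const.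
intros t. apply HG.
Qed.

Lemma indep_pjet N G i : indep N G -> indep N (pjet i G).
Proof.
intros HG x j j' Hjj. destruct (le_lt_dec N i) as [Hi|Hi].
- rewrite !(pjet_zero N) by auto. reflexivity.
- unfold pjet. rewrite (Hjj i Hi). apply Derive_ext. intros t. apply HG.
  intros n Hn. unfold upd. destruct (Nat.eqb n i); auto.
Qed.

Lemma xind_pjet G i : xind G -> xind (pjet i G).
Proof. intros HG t x j. unfold pjet. apply Derive_ext. intros s. apply HG. Qed.

Lemma xind_TotD G : xind G -> xind (TotD G).
Proof.
intros HG t x j. unfold TotD. rewrite !px_zero by auto.
f_equal. apply Series_ext. intros n. rewrite (xind_pjet G n HG t x j). reflexivity.
Qed.

Lemma indep_TotD N G : indep N G -> indep (S N) (TotD G).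
Proof.
intros HG x j j' Hjj. unfold TotD. f_equal.
- unfold px. apply Derive_ext. intros t. apply HG. intros i Hi. apply Hjj. lia.
- apply Series_ext. intros n. destruct (le_lt_dec N n) as [Hn|Hn].
  + rewrite !(pjet_zero N) by auto. ring.
  + rewrite (Hjj (S n)) by lia. f_equal. apply (indep_pjet N). auto.
    intros i Hi. apply Hjj. lia.
Qed.

Lemma TotD4 G x j : indep 4 G -> xind G ->
  TotD G x j = j 1%nat * pjet 0 G x j + j 2%nat * pjet 1 G x j
             + j 3%nat * pjet 2 G x j + j 4%nat * pjet 3 G x j.
Proof.
intros HN HX. unfold TotD. rewrite px_zero by auto. rewrite series4. ring.
intros i Hi. rewrite (pjet_zero 4) by auto. ring.
Qed.

Lemma indep_mono N M G : (N <= M)%nat -> indep N G -> indep M G.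
Proof. intros H HG x j j' Hjj. apply HG. intros; apply Hjj; lia. Qed.

Lemma TotD_zero G x j : (forall x j, G x j = 0) -> TotD G x j = 0.
Proof.
intros H. unfold TotD, px, pjet.
rewrite (Derive_ext _ (fun _ => 0)) by auto. rewrite Derive_const.
rewrite (Series_ext _ (fun _ => 0)). 
- rewrite (series4 (fun _ => 0)) by auto. ring.
- intros n. rewrite (Derive_ext _ (fun _ => 0)) by auto. rewrite Derive_const. ring.
Qed.

Lemma iter_zero n G x j : (forall x j, G x j = 0) -> Nat.iter n TotD G x j = 0.
Proof.
revert x j. induction n; intros x j H; simpl. auto. apply TotD_zero. intros; apply IHn; auto.
Qed.

Lemma Euler3 F x j : indep 3 F ->
  Euler F x j = pjet 0 F x j - TotD (pjet 1 F) x j + TotD (TotD (pjet 2 F)) x j.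
Proof.
intros HF. unfold Euler. rewrite series4. simpl.
pose proof (iter_zero 3 (pjet 3 F) x j) as Z. simpl in Z. rewrite Z. ring. intros; apply (pjet_zero 3); auto.
intros i Hi. rewrite iter_zero. ring. intros; apply (pjet_zero 3); auto. lia.
Qed.

Lemma indep_kfun h1 h2 h3 : indep 3 (kfun h1 h2 h3).
Proof. intros x j j' H. unfold kfun. rewrite !H by lia. reflexivity. Qed.
Lemma xind_kfun h1 h2 h3 : xind (kfun h1 h2 h3).
Proof. intros t x j. reflexivity. Qed.

Lemma cone_open2 b s u p : cone b s u p ->
  exists eps : posreal, forall u' p', Rabs (u' - u) < eps -> Rabs (p' - p) < eps -> cone b s u' p'.
Proof.
intros H. destruct b; unfold cone in *.
- assert (Hd : 0 < (sgn s * u - Rabs p) / 2) by lra.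
  exists (mkposreal _ Hd). simpl. intros u' p' H1 H2.
  destruct s; unfold sgn in *; 
  unfold Rabs in *; repeat destruct Rcase_abs; lra.
- assert (Hd : 0 < (sgn s * p - Rabs u) / 2) by lra.
  exists (mkposreal _ Hd). simpl. intros u' p' H1 H2.
  destruct s; unfold sgn in *; 
  unfold Rabs in *; repeat destruct Rcase_abs; lra.
Qed.

Lemma cone_loc b s j i : cone b s (j 0%nat) (j 1%nat) ->
  locally (j i) (fun t => cone b s (upd j i t 0%nat) (upd j i t 1%nat)).
Proof.
intros H. destruct (cone_open2 _ _ _ _ H) as [eps He].
exists eps. intros t Ht. unfold ball in Ht; simpl in Ht. unfold AbsRing_ball, abs, minus, plus, opp in Ht; simpl in Ht.
destruct i as [|[|i]]; unfold upd; simpl.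
- apply He. exact Ht. rewrite Rminus_eq_0, Rabs_R0. apply cond_pos.
- apply He. rewrite Rminus_eq_0, Rabs_R0. apply cond_pos. exact Ht.
- auto.
Qed.

Lemma pjet_loc b s G (Phi : jet -> R) i x j :
  (forall x' j', cone b s (j' 0%nat) (j' 1%nat) -> G x' j' = Phi j') ->
  cone b s (j 0%nat) (j 1%nat) ->
  pjet i G x j = Derive (fun t => Phi (upd j i t)) (j i).
Proof.
intros HG Hc. unfold pjet. apply Derive_ext_loc.
generalize (cone_loc b s j i Hc). apply filter_imp. intros t Ht. apply HG. auto.
Qed.

Section Sm.
Variable C : R -> R -> Prop.
Lemma L_u0 f u p : smooth_on C f -> C u p -> ex_derive (fun t => f t p) u.
Proof. intros H Hc. exact (proj1 (H nil u p Hc)). Qed.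
Lemma L_u1 f u p : smooth_on C f -> C u p -> ex_derive (fun t => pu f t p) u.
Proof. intros H Hc. exact (proj1 (H (true::nil) u p Hc)). Qed.
Lemma L_u2 f u p : smooth_on C f -> C u p -> ex_derive (fun t => pp f t p) u.
Proof. intros H Hc. exact (proj1 (H (false::nil) u p Hc)). Qed.
Lemma L_p0 f u p : smooth_on C f -> C u p -> ex_derive (fun t => f u t) p.
Proof. intros H Hc. exact (proj1 (proj2 (H nil u p Hc))). Qed.
Lemma L_p1 f u p : smooth_on C f -> C u p -> ex_derive (fun t => pu f u t) p.
Proof. intros H Hc. exact (proj1 (proj2 (H (true::nil) u p Hc))). Qed.
Lemma L_p2 f u p : smooth_on C f -> C u p -> ex_derive (fun t => pp f u t) p.
Proof. intros H Hc. exact (proj1 (proj2 (H (false::nil) u p Hc))). Qed.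
End Sm.

Ltac exd1 := match goal with
  | |- ex_derive (fun t => pu ?f t ?p) ?u => eapply (L_u1 _ f u p); eassumption
  | |- ex_derive (fun t => pp ?f t ?p) ?u => eapply (L_u2 _ f u p); eassumption
  | |- ex_derive (fun t => pu ?f ?u t) ?p => eapply (L_p1 _ f u p); eassumption
  | |- ex_derive (fun t => pp ?f ?u t) ?p => eapply (L_p2 _ f u p); eassumption
  | |- ex_derive (fun t => ?f t ?p) ?u => eapply (L_u0 _ f u p); eassumption
  | |- ex_derive (fun t => ?f ?u t) ?p => eapply (L_p0 _ f u p); eassumption
  | |- True => exact I
  end.
Ltac exd := repeat match goal with |- _ /\ _ => split end; exd1.

Definition pol (f1 f2 f3 : R->R->R) u p m := f1 u p * m + f2 u p * m^2 + f3 u p * m^3.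
Definition dpol (f1 f2 f3 : R->R->R) u p m := f1 u p + 2 * f2 u p * m + 3 * f3 u p * m^2.
Definition ddpol (f2 f3 : R->R->R) u p m := 2 * f2 u p + 6 * f3 u p * m.
Definition dddpol (f3 : R->R->R) u p := 6 * f3 u p.

Ltac gen_j j Hc := revert Hc; generalize (j 0%nat) (j 1%nat) (j 2%nat) (j 3%nat) (j 4%nat);
  intros u p w z y Hc.
Ltac dfold := repeat match goal with
  | |- context [Derive (fun t => ?f t ?p) ?u] => change (Derive (fun t => f t p) u) with (pu f u p)
  | |- context [Derive (fun t => ?f ?u t) ?p] => change (Derive (fun t => f u t) p) with (pp f u p)
  end.
Ltac derw := match goal with |- context [Derive ?f ?x] =>
  erewrite (is_derive_unique f x); [| auto_derive; [exd | reflexivity]] end.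
Ltac dall := unfold pol, dpol, ddpol, dddpol; repeat (dfold; derw); dfold; ring.
Ltac dcalc := apply is_derive_unique; auto_derive; [exd | unfold pol, dpol, ddpol, dddpol, pu, pp; ring].

Section Eul.
Variables (b s : bool) (h1 h2 h3 : R -> R -> R).
Hypothesis S1 : smooth_on (cone b s) h1.
Hypothesis S2 : smooth_on (cone b s) h2.
Hypothesis S3 : smooth_on (cone b s) h3.


Definition P0f (j : jet) := let u := j 0%nat in let p := j 1%nat in let m := j 0%nat - j 2%nat in
  pol (pu h1) (pu h2) (pu h3) u p m + dpol h1 h2 h3 u p m.
Definition P1f (j : jet) := let u := j 0%nat in let p := j 1%nat in let m := j 0%nat - j 2%nat in
  pol (pp h1) (pp h2) (pp h3) u p m.
Definition P2f (j : jet) := let u := j 0%nat in let p := j 1%nat in let m := j 0%nat - j 2%nat in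
  - dpol h1 h2 h3 u p m.

Lemma P0_ok x j : cone b s (j 0%nat) (j 1%nat) -> pjet 0 (kfun h1 h2 h3) x j = P0f j.
Proof.
intros Hc. unfold pjet, kfun, P0f. cbv beta iota delta [upd Nat.eqb]. gen_j j Hc. Time dcalc.
Qed.
Lemma P1_ok x j : cone b s (j 0%nat) (j 1%nat) -> pjet 1 (kfun h1 h2 h3) x j = P1f j.
Proof.
intros Hc. unfold pjet, kfun, P1f. cbv beta iota delta [upd Nat.eqb]. gen_j j Hc. dcalc.
Qed.
Lemma P2_ok x j : cone b s (j 0%nat) (j 1%nat) -> pjet 2 (kfun h1 h2 h3) x j = P2f j.
Proof.
intros Hc. unfold pjet, kfun, P2f. cbv beta iota delta [upd Nat.eqb]. gen_j j Hc. dcalc.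
Qed.

Definition T1f (j : jet) := let u := j 0%nat in let p := j 1%nat in let m := j 0%nat - j 2%nat in
  let w := j 2%nat in let z := j 3%nat in
  p * (pol (pu (pp h1)) (pu (pp h2)) (pu (pp h3)) u p m + dpol (pp h1) (pp h2) (pp h3) u p m)
  + w * pol (pp (pp h1)) (pp (pp h2)) (pp (pp h3)) u p m
  + z * (- dpol (pp h1) (pp h2) (pp h3) u p m).

Lemma T1_ok x j : cone b s (j 0%nat) (j 1%nat) -> TotD (pjet 1 (kfun h1 h2 h3)) x j = T1f j.
Proof.
intros Hc.
assert (HI : indep 3 (pjet 1 (kfun h1 h2 h3))) by (apply indep_pjet, indep_kfun).
rewrite TotD4; [| apply (indep_mono 3); auto | apply xind_pjet, xind_kfun].
rewrite (pjet_zero 3 _ 3) by auto.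
rewrite !(pjet_loc b s _ P1f) by (auto; intros; apply P1_ok; auto).
unfold T1f, P1f. cbv beta iota delta [upd Nat.eqb]. gen_j j Hc.
rewrite (Rmult_0_r y), Rplus_0_r.
Time dall.
Qed.

Definition Qf (j : jet) := let u := j 0%nat in let p := j 1%nat in let m := j 0%nat - j 2%nat in
  let w := j 2%nat in let z := j 3%nat in
  p * (- (dpol (pu h1) (pu h2) (pu h3) u p m + ddpol h2 h3 u p m))
  + w * (- dpol (pp h1) (pp h2) (pp h3) u p m)
  + z * ddpol h2 h3 u p m.

Lemma Q_ok x j : cone b s (j 0%nat) (j 1%nat) -> TotD (pjet 2 (kfun h1 h2 h3)) x j = Qf j.
Proof.
intros Hc.
assert (HI : indep 3 (pjet 2 (kfun h1 h2 h3))) by (apply indep_pjet, indep_kfun).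
rewrite TotD4; [| apply (indep_mono 3); auto | apply xind_pjet, xind_kfun].
rewrite (pjet_zero 3 _ 3) by auto.
rewrite !(pjet_loc b s _ P2f) by (auto; intros; apply P2_ok; auto).
unfold Qf, P2f. cbv beta iota delta [upd Nat.eqb]. gen_j j Hc.
rewrite (Rmult_0_r y), Rplus_0_r.
dall.
Qed.

Definition T2f (j : jet) := let u := j 0%nat in let p := j 1%nat in let m := j 0%nat - j 2%nat in
  let w := j 2%nat in let z := j 3%nat in let y := j 4%nat in
  p * (- p * (dpol (pu (pu h1)) (pu (pu h2)) (pu (pu h3)) u p m + 2 * ddpol (pu h2) (pu h3) u p m + dddpol h3 u p)
       - w * (dpol (pu (pp h1)) (pu (pp h2)) (pu (pp h3)) u p m + ddpol (pp h2) (pp h3) u p m)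
       + z * (ddpol (pu h2) (pu h3) u p m + dddpol h3 u p))
  + w * (- (dpol (pu h1) (pu h2) (pu h3) u p m + ddpol h2 h3 u p m)
       - p * (dpol (pp (pu h1)) (pp (pu h2)) (pp (pu h3)) u p m + ddpol (pp h2) (pp h3) u p m)
       - w * dpol (pp (pp h1)) (pp (pp h2)) (pp (pp h3)) u p m
       + z * ddpol (pp h2) (pp h3) u p m)
  + z * (p * (ddpol (pu h2) (pu h3) u p m + dddpol h3 u p)
       - dpol (pp h1) (pp h2) (pp h3) u p m + w * ddpol (pp h2) (pp h3) u p m - z * dddpol h3 u p)
  + y * ddpol h2 h3 u p m.

Lemma T2_ok x j : cone b s (j 0%nat) (j 1%nat) -> TotD (TotD (pjet 2 (kfun h1 h2 h3))) x j = T2f j.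
Proof.
intros Hc.
assert (HI : indep 4 (TotD (pjet 2 (kfun h1 h2 h3)))) by (apply indep_TotD, indep_pjet, indep_kfun).
rewrite TotD4; [| auto | apply xind_TotD, xind_pjet, xind_kfun].
rewrite !(pjet_loc b s _ Qf) by (auto; intros; apply Q_ok; auto).
unfold T2f, Qf. cbv beta iota delta [upd Nat.eqb]. gen_j j Hc.
Time dall.
Qed.

Definition Ef (j : jet) := P0f j - T1f j + T2f j.

Lemma Euler_ok x j : cone b s (j 0%nat) (j 1%nat) -> Euler (kfun h1 h2 h3) x j = Ef j.
Proof.
intros Hc. rewrite Euler3 by apply indep_kfun.
rewrite P0_ok, T1_ok, T2_ok by auto. reflexivity.
Qed.
End Eul.

Lemma cont2 (g : R -> R -> R) u p : continuous (fun z : R * R => g (fst z) (snd z)) (u, p) ->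
  forall eps : posreal, exists d : posreal, forall u' p', Rabs (u' - u) < d -> Rabs (p' - p) < d ->
    Rabs (g u' p' - g u p) < eps.
Proof.
intros H eps.
assert (L : locally (g u p) (ball (g u p) eps)) by apply locally_ball.
specialize (H _ L). destruct H as [d Hd]. exists d. intros u' p' H1 H2.
apply (Hd (u', p')). split; simpl; auto.
Qed.

Lemma diffC1 (C : R -> R -> Prop) f u p : smooth_on C f -> C u p ->
  (exists e : posreal, forall u' p', Rabs (u' - u) < e -> Rabs (p' - p) < e -> C u' p') ->
  differentiable_pt_lim f u p (pu f u p) (pp f u p).
Proof.
intros Hs Hc [e3 He3] eps.
assert (He2 : 0 < eps / 2) by (destruct eps; simpl; lra).
destruct (cont2 (pu f) u p (proj2 (proj2 (Hs (true::nil) u p Hc))) (mkposreal _ He2)) as [d1 Hd1].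
assert (Dp : derivable_pt_lim (fun t => f u t) p (pp f u p)).
{ apply is_derive_Reals. apply Derive_correct. exact (L_p0 C f u p Hs Hc). }
destruct (Dp _ He2) as [d2 Hd2].
assert (Hd : 0 < Rmin d1 (Rmin d2 e3)).
{ destruct d1, d2, e3; simpl. repeat apply Rmin_glb_lt; auto. }
exists (mkposreal _ Hd). simpl. intros u' v Hu Hv.
assert (Hu1 : Rabs (u' - u) < d1) by (eapply Rlt_le_trans; [exact Hu| apply Rmin_l]).
assert (Hv1 : Rabs (v - p) < d1) by (eapply Rlt_le_trans; [exact Hv| apply Rmin_l]).
assert (Hv2 : Rabs (v - p) < d2) by (eapply Rlt_le_trans; [exact Hv| eapply Rle_trans; [apply Rmin_r|apply Rmin_l]]).
assert (Hu3 : Rabs (u' - u) < e3) by (eapply Rlt_le_trans; [exact Hu| eapply Rle_trans; [apply Rmin_r|apply Rmin_r]]).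
assert (Hv3 : Rabs (v - p) < e3) by (eapply Rlt_le_trans; [exact Hv| eapply Rle_trans; [apply Rmin_r|apply Rmin_r]]).
destruct (MVT_cor4 (fun t => f t v) (fun c => pu f c v) u (Rabs (u' - u))) with (b := u')
  as [c [Hc1 Hc2]].
{ intros c Hcu. apply Derive_correct. apply (L_u0 C). auto. apply He3; lra. }
{ lra. }
assert (Hpc : Rabs (pu f c v - pu f u p) < eps / 2) by (apply Hd1; lra).
assert (Hq : Rabs (f u v - f u p - pp f u p * (v - p)) <= eps / 2 * Rabs (v - p)).
{ destruct (Req_dec v p) as [E|E].
  - subst. replace (f u p - f u p - pp f u p * (p - p)) with 0 by ring. replace (p - p) with 0 by ring.
    rewrite Rabs_R0. lra.
  - assert (Hh : v - p <> 0) by lra.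
    specialize (Hd2 (v - p) Hh Hv2). replace (p + (v - p)) with v in Hd2 by ring.
    replace (f u v - f u p - pp f u p * (v - p)) with (((f u v - f u p) / (v - p) - pp f u p) * (v - p))
      by (field; auto).
    rewrite Rabs_mult. apply Rmult_le_compat_r. apply Rabs_pos. lra. }
replace (f u' v - f u p - (pu f u p * (u' - u) + pp f u p * (v - p)))
  with ((pu f c v - pu f u p) * (u' - u) + (f u v - f u p - pp f u p * (v - p)))
  by (cbv beta in Hc1; lra).
eapply Rle_trans. apply Rabs_triang. rewrite Rabs_mult.
assert (Rabs (pu f c v - pu f u p) * Rabs (u' - u) <= eps / 2 * Rabs (u' - u)).
{ apply Rmult_le_compat_r. apply Rabs_pos. lra. }
assert (Rabs (u' - u) <= Rmax (Rabs (u' - u)) (Rabs (v - p))) by apply Rmax_l.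
assert (Rabs (v - p) <= Rmax (Rabs (u' - u)) (Rabs (v - p))) by apply Rmax_r.
assert (0 < eps) by apply cond_pos.
nra.
Qed.

Lemma chain2 (C : R -> R -> Prop) f (a q : R -> R) t da dq : smooth_on C f -> C (a t) (q t) ->
  (exists e : posreal, forall u' p', Rabs (u' - a t) < e -> Rabs (p' - q t) < e -> C u' p') ->
  is_derive a t da -> is_derive q t dq ->
  is_derive (fun s => f (a s) (q s)) t (pu f (a t) (q t) * da + pp f (a t) (q t) * dq).
Proof.
intros Hs Hc Ho Ha Hq. apply is_derive_Reals. apply derivable_pt_lim_comp_2d.
apply diffC1 with C; auto. apply is_derive_Reals; auto. apply is_derive_Reals; auto.
Qed.

Lemma seg0 (f : R -> R) a b : (forall t, Rmin a b <= t <= Rmax a b -> is_derive f t 0) -> f a = f b.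
Proof.
intros H. destruct (Rtotal_order a b) as [Hab|[Hab|Hab]].
- apply eq_is_derive; auto. intros t Ht. apply H. rewrite Rmin_left, Rmax_right by lra. auto.
- subst; auto.
- symmetry. apply eq_is_derive; auto. intros t Ht. apply H. rewrite Rmin_right, Rmax_left by lra. auto.
Qed.

Section PDE.
Variables (b s : bool) (h : R -> R -> R).
Hypothesis Hs : smooth_on (cone b s) h.

Definition Aexp u p := 2 * pu h u p + u * pp (pp h) u p + p * pp (pu h) u p.
Definition Bexp u p := u * pu h u p + h u p - p * u * pu (pp h) u p - p * pp h u p - p ^ 2 * pu (pu h) u p.
Definition Rexp u p := u * h u p - p ^ 2 * pu h u p - u * p * pp h u p.

Lemma dRu u p : cone b s u p -> is_derive (fun t => Rexp t p) u (Bexp u p).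
Proof.
intros Hc. unfold Rexp, Bexp. auto_derive. exd. dfold. ring.
Qed.
Lemma dRp u p : cone b s u p -> is_derive (fun t => Rexp u t) p (- p * Aexp u p).
Proof.
intros Hc. unfold Rexp, Aexp. auto_derive. exd. dfold. ring.
Qed.

Lemma useg u1 u2 p : (forall t, Rmin u1 u2 <= t <= Rmax u1 u2 -> cone b s t p) ->
  (forall u p, cone b s u p -> Bexp u p = 0) -> Rexp u1 p = Rexp u2 p.
Proof.
intros H HB. apply (seg0 (fun t => Rexp t p)). intros t Ht.
rewrite <- (HB t p) by auto. apply dRu. auto.
Qed.
Lemma pseg u p1 p2 : (forall t, Rmin p1 p2 <= t <= Rmax p1 p2 -> cone b s u t) ->
  (forall u p, cone b s u p -> Aexp u p = 0) -> Rexp u p1 = Rexp u p2.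
Proof.
intros H HA. apply (seg0 (fun t => Rexp u t)). intros t Ht.
replace 0 with (- t * Aexp u t) by (rewrite HA by auto; ring). apply dRp. auto.
Qed.

Lemma R_const : (forall u p, cone b s u p -> Aexp u p = 0 /\ Bexp u p = 0) ->
  forall u1 p1 u2 p2, cone b s u1 p1 -> cone b s u2 p2 -> Rexp u1 p1 = Rexp u2 p2.
Proof.
intros H u1 p1 u2 p2 H1 H2.
assert (HA : forall u p, cone b s u p -> Aexp u p = 0) by (intros; apply H; auto).
assert (HB : forall u p, cone b s u p -> Bexp u p = 0) by (intros; apply H; auto).
pose proof useg as US. pose proof pseg as PS.
destruct b; unfold cone in *.
- set (U := sgn s * Rmax (sgn s * u1) (sgn s * u2)).
  assert (HsU : sgn s * U = Rmax (sgn s * u1) (sgn s * u2)) by (unfold U; destruct s; simpl; ring).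
  assert (M1 := Rmax_l (sgn s * u1) (sgn s * u2)). assert (M2 := Rmax_r (sgn s * u1) (sgn s * u2)).
  transitivity (Rexp U p1); [|transitivity (Rexp U p2)].
  + apply US; auto. intros t Ht. simpl.
    assert (sgn s * t >= sgn s * u1).
    { destruct s; simpl in *; unfold Rmin, Rmax in Ht; repeat destruct Rle_dec; lra. }
    lra.
  + apply PS; auto. intros t Ht. simpl.
    assert (Rabs t <= Rmax (Rabs p1) (Rabs p2)).
    { unfold Rmin, Rmax in *; unfold Rabs; repeat destruct Rle_dec; repeat destruct Rcase_abs; lra. }
    assert (Rmax (Rabs p1) (Rabs p2) < sgn s * U).
    { apply Rmax_lub_lt; lra. } lra.
  + apply US; auto. intros t Ht. simpl.
    assert (sgn s * t >= sgn s * u2).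
    { destruct s; simpl in *; unfold Rmin, Rmax in Ht; repeat destruct Rle_dec; lra. }
    lra.
- set (P := sgn s * Rmax (sgn s * p1) (sgn s * p2)).
  assert (HsP : sgn s * P = Rmax (sgn s * p1) (sgn s * p2)) by (unfold P; destruct s; simpl; ring).
  assert (M1 := Rmax_l (sgn s * p1) (sgn s * p2)). assert (M2 := Rmax_r (sgn s * p1) (sgn s * p2)).
  transitivity (Rexp u1 P); [|transitivity (Rexp u2 P)].
  + apply PS; auto. intros t Ht. simpl.
    assert (sgn s * t >= sgn s * p1).
    { destruct s; simpl in *; unfold Rmin, Rmax in Ht; repeat destruct Rle_dec; lra. }
    lra.
  + apply US; auto. intros t Ht. simpl.
    assert (Rabs t <= Rmax (Rabs u1) (Rabs u2)).
    { unfold Rmin, Rmax in *; unfold Rabs; repeat destruct Rle_dec; repeat destruct Rcase_abs; lra. }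
    assert (Rmax (Rabs u1) (Rabs u2) < sgn s * P).
    { apply Rmax_lub_lt; lra. } lra.
  + apply PS; auto. intros t Ht. simpl.
    assert (sgn s * t >= sgn s * p2).
    { destruct s; simpl in *; unfold Rmin, Rmax in Ht; repeat destruct Rle_dec; lra. }
    lra.
Qed.
End PDE.

Lemma lin_ode (G dG : R -> R) : (forall t, is_derive G t (dG t)) -> (forall t, t * dG t = G t) ->
  forall t, G t = t * G 1.
Proof.
intros HD HE.
assert (G0 : G 0 = 0) by (rewrite <- HE; ring).
(* quotient is constant on each half line *)
assert (Hq : forall a c, 0 < a * c -> G a / a = G c / c).
{ intros a c Hac.
  apply (seg0 (fun t => G t / t)). intros t Ht.
  assert (Ht0 : t <> 0).
  { intro; subst. unfold Rmin, Rmax in Ht; destruct Rle_dec; nra. }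
  replace 0 with ((dG t * t - G t * 1) / t ^ 2) by (rewrite <- (HE t); field; auto).
  apply (is_derive_div G (fun t => t)); auto. now auto_derive. }
assert (L : forall eps, 0 < eps -> Rabs (G 1 - dG 0) < eps /\ Rabs (G (-1) / (-1) - dG 0) < eps).
{ intros eps He. pose proof (proj1 (is_derive_Reals G 0 (dG 0)) (HD 0) eps He) as [del Hdel].
  assert (Hd : 0 < del) by apply cond_pos.
  set (e := del / 2).
  assert (He1 : 0 < e) by (unfold e; lra).
  split.
  - specialize (Hdel e ltac:(lra) ltac:(rewrite Rabs_pos_eq; unfold e; lra)).
    rewrite Rplus_0_l, G0, Rminus_0_r in Hdel. rewrite (Hq e 1) in Hdel by lra.
    replace (G 1 / 1) with (G 1) in Hdel by field. auto.
  - specialize (Hdel (- e) ltac:(lra) ltac:(rewrite Rabs_Ropp, Rabs_pos_eq; unfold e; lra)).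
    rewrite Rplus_0_l, G0, Rminus_0_r in Hdel. rewrite (Hq (- e) (-1)) in Hdel by lra. auto. }
assert (E1 : G 1 = dG 0).
{ destruct (Req_dec (G 1 - dG 0) 0). lra.
  assert (0 < Rabs (G 1 - dG 0)) by (apply Rabs_pos_lt; auto).
  destruct (L _ H0). lra. }
assert (E2 : G (-1) / (-1) = dG 0).
{ destruct (Req_dec (G (-1) / (-1) - dG 0) 0). lra.
  assert (0 < Rabs (G (-1) / (-1) - dG 0)) by (apply Rabs_pos_lt; auto).
  destruct (L _ H0). lra. }
intros t. destruct (Rtotal_order t 0) as [Ht|[Ht|Ht]].
- assert (Hq' := Hq t (-1) ltac:(nra)). rewrite E2, <- E1 in Hq'.
  assert (t <> 0) by lra.
  replace (G t) with (G t / t * t) by (field; auto). rewrite Hq'. ring.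
- subst. rewrite G0. ring.
- assert (Hq' := Hq t 1 ltac:(nra)).
  assert (t <> 0) by lra.
  replace (G t) with (G t / t * t) by (field; auto). rewrite Hq'. field.
Qed.

Lemma dsqrtm s d t : d < 0 -> is_derive (fun t => s * sqrt (t^2 - d)) t (s * t / sqrt (t^2 - d)).
Proof.
intros H. assert (0 < t^2 - d) by nra. assert (0 < sqrt (t^2 - d)) by (apply sqrt_lt_R0; auto).
auto_derive. nra. replace (t*(t*1) + - d) with (t^2 - d) by ring. field. lra.
Qed.
Lemma dsqrtp s d t : 0 < d -> is_derive (fun t => s * sqrt (t^2 + d)) t (s * t / sqrt (t^2 + d)).
Proof.
intros H. assert (0 < t^2 + d) by nra. assert (0 < sqrt (t^2 + d)) by (apply sqrt_lt_R0; auto).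
auto_derive. nra. replace (t*(t*1) + d) with (t^2 + d) by ring. field. lra.
Qed.

Lemma sgn_sq s : sgn s * sgn s = 1.
Proof. destruct s; simpl; ring. Qed.

Lemma sqrt_gt a x : 0 <= a -> a ^ 2 < x -> a < sqrt x.
Proof.
intros Ha Hx. assert (0 < x) by nra. pose proof (pow2_sqrt x ltac:(lra)).
assert (0 <= sqrt x) by apply sqrt_pos. nra.
Qed.

Lemma sqrt_sq_pos a : 0 <= a -> sqrt (a ^ 2) = a.
Proof. apply sqrt_pow2. Qed.


Lemma id_der t : is_derive (fun t : R => t) t 1.
Proof. now auto_derive. Qed.

Lemma R_of_form b s h k1 k0 : smooth_on (cone b s) h ->
  (forall u p, cone b s u p -> h u p = h1form k1 k0 u p) ->
  forall u p, cone b s u p -> Rexp h u p = k0.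
Proof.
intros Hs Hf u p Hc.
assert (SS := sgn_sq s).
assert (key : forall d, d = u ^ 2 - p ^ 2 -> d <> 0 ->
  p * pu h u p + u * pp h u p = u * k1 d + k0 * p / d).
{ intros d Hd Hd0. destruct b; unfold cone in Hc.
  -
    assert (Hu : sgn s * u > 0) by (pose proof (Rabs_pos p); lra).
    assert (Hdp : 0 < d) by (subst d; unfold Rabs in Hc; destruct Rcase_abs; destruct s; simpl in *; nra).
    set (U := fun t => sgn s * sqrt (t ^ 2 + d)).
    assert (HS : forall t, 0 < sqrt (t ^ 2 + d)) by (intros; apply sqrt_lt_R0; nra).
    assert (HU2 : forall t, U t ^ 2 = t ^ 2 + d).
    { intros t. unfold U. rewrite Rpow_mult_distr, pow2_sqrt by nra.
      replace (sgn s ^ 2) with (sgn s * sgn s) by ring. rewrite SS. ring. }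
    assert (HUc : forall t, cone true s (U t) t).
    { intros t. simpl. unfold U. replace (sgn s * (sgn s * sqrt (t ^ 2 + d))) with (sqrt (t ^ 2 + d))
        by (rewrite <- Rmult_assoc, SS; ring).
      apply Rlt_gt, sqrt_gt. apply Rabs_pos. replace (Rabs t ^ 2) with (t ^ 2) by (unfold Rabs; destruct Rcase_abs; ring); nra. }
    assert (HSp : sqrt (p ^ 2 + d) = sgn s * u).
    { replace (p ^ 2 + d) with ((sgn s * u) ^ 2) by (rewrite Hd, Rpow_mult_distr; replace (sgn s ^ 2) with (sgn s * sgn s) by ring; rewrite SS; ring).
      apply sqrt_sq_pos. lra. }
    assert (HUp : U p = u) by (unfold U; rewrite HSp, <- Rmult_assoc, SS; ring).
    assert (Heq : forall t, h (U t) t = t * k1 d + k0 * U t / d).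
    { intros t. rewrite Hf by apply HUc. unfold h1form.
      replace (U t ^ 2 - t ^ 2) with d by (rewrite HU2; ring). ring. }
    assert (D1 := chain2 (cone true s) h U (fun t => t) p (sgn s * p / sqrt (p ^ 2 + d)) 1 Hs
      (HUc p) (cone_open2 _ _ _ _ (HUc p)) (dsqrtp (sgn s) d p Hdp) (id_der p)).
    assert (D2 : is_derive (fun t => t * k1 d + k0 * U t / d) p (k1 d + k0 * (sgn s * p / sqrt (p ^ 2 + d)) / d)).
    { unfold U. auto_derive. nra. replace (p * (p * 1) + d) with (p ^ 2 + d) by ring. field. split. lra.
      pose proof (HS p); lra. }
    apply is_derive_unique in D1. apply is_derive_unique in D2.
    rewrite (Derive_ext (fun t => h (U t) t) (fun t => t * k1 d + k0 * U t / d)) in D1 by apply Heq.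
    pose proof (eq_trans (eq_sym D1) D2) as D3. clear D1 D2. rename D3 into D2. rewrite HUp, HSp in D2.
    assert (u <> 0) by (intro Hu0; rewrite Hu0 in Hu; lra).
    assert (sgn s <> 0) by (destruct s; simpl; lra).
    replace (p * pu h u p + u * pp h u p) with (u * (pu h u p * (sgn s * p / (sgn s * u)) + pp h u p * 1))
      by (field; auto).
    rewrite D2. field. auto.
  -
    assert (Hp : sgn s * p > 0) by (pose proof (Rabs_pos u); lra).
    assert (Hdp : d < 0) by (subst d; unfold Rabs in Hc; destruct Rcase_abs; destruct s; simpl in *; nra).
    set (P := fun t => sgn s * sqrt (t ^ 2 - d)).
    assert (HS : forall t, 0 < sqrt (t ^ 2 - d)) by (intros; apply sqrt_lt_R0; nra).
    assert (HP2 : forall t, P t ^ 2 = t ^ 2 - d).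
    { intros t. unfold P. rewrite Rpow_mult_distr, pow2_sqrt by nra.
      replace (sgn s ^ 2) with (sgn s * sgn s) by ring. rewrite SS. ring. }
    assert (HPc : forall t, cone false s t (P t)).
    { intros t. simpl. unfold P. replace (sgn s * (sgn s * sqrt (t ^ 2 - d))) with (sqrt (t ^ 2 - d))
        by (rewrite <- Rmult_assoc, SS; ring).
      apply Rlt_gt, sqrt_gt. apply Rabs_pos. replace (Rabs t ^ 2) with (t ^ 2) by (unfold Rabs; destruct Rcase_abs; ring); nra. }
    assert (HSu : sqrt (u ^ 2 - d) = sgn s * p).
    { replace (u ^ 2 - d) with ((sgn s * p) ^ 2) by (rewrite Hd, Rpow_mult_distr; replace (sgn s ^ 2) with (sgn s * sgn s) by ring; rewrite SS; ring).
      apply sqrt_sq_pos. lra. }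
    assert (HPu : P u = p) by (unfold P; rewrite HSu, <- Rmult_assoc, SS; ring).
    assert (Heq : forall t, h t (P t) = P t * k1 d + k0 * t / d).
    { intros t. rewrite Hf by apply HPc. unfold h1form.
      replace (t ^ 2 - P t ^ 2) with d by (rewrite HP2; ring). ring. }
    assert (D1 := chain2 (cone false s) h (fun t => t) P u 1 (sgn s * u / sqrt (u ^ 2 - d)) Hs
      (HPc u) (cone_open2 _ _ _ _ (HPc u)) (id_der u) (dsqrtm (sgn s) d u Hdp)).
    assert (D2 : is_derive (fun t => P t * k1 d + k0 * t / d) u (sgn s * u / sqrt (u ^ 2 - d) * k1 d + k0 / d)).
    { unfold P. auto_derive. nra. replace (u * (u * 1) + - d) with (u ^ 2 - d) by ring. field. split. lra.
      pose proof (HS u); lra. }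
    apply is_derive_unique in D1. apply is_derive_unique in D2.
    rewrite (Derive_ext (fun t => h t (P t)) (fun t => P t * k1 d + k0 * t / d)) in D1 by apply Heq.
    pose proof (eq_trans (eq_sym D1) D2) as D3. clear D1 D2. rename D3 into D2. rewrite HPu, HSu in D2.
    assert (p <> 0) by (intro Hp0; rewrite Hp0 in Hp; lra).
    assert (sgn s <> 0) by (destruct s; simpl; lra).
    replace (p * pu h u p + u * pp h u p) with (p * (pu h u p * 1 + pp h u p * (sgn s * u / (sgn s * p))))
      by (field; auto).
    rewrite D2. field. auto. }
assert (Hd0 : u ^ 2 - p ^ 2 <> 0).
{ destruct b; unfold cone in Hc; unfold Rabs in Hc; destruct Rcase_abs; destruct s; simpl in *; nra. }
unfold Rexp.
replace (u * h u p - p ^ 2 * pu h u p - u * p * pp h u p) with (u * h u p - p * (p * pu h u p + u * pp h u p)) by ring.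
rewrite (key _ eq_refl Hd0), Hf by auto. unfold h1form. field. auto.
Qed.

Lemma form_of_R b s h c : smooth_on (cone b s) h ->
  (forall u p, cone b s u p -> Rexp h u p = c) ->
  exists k1, forall u p, cone b s u p -> h u p = h1form k1 c u p.
Proof.
intros Hs HR. assert (SS := sgn_sq s).
assert (Hsg : sgn s <> 0) by (destruct s; simpl; lra).
destruct b.
- exists (fun d => h (sgn s * sqrt (1 ^ 2 + d)) 1 - c * (sgn s * sqrt (1 ^ 2 + d)) / d).
  intros u p Hc. unfold cone in Hc. set (d := u ^ 2 - p ^ 2).
  assert (Hu : sgn s * u > 0) by (pose proof (Rabs_pos p); lra).
  assert (Hdp : 0 < d) by (unfold d; unfold Rabs in Hc; destruct Rcase_abs; destruct s; simpl in *; nra).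
  set (U := fun t => sgn s * sqrt (t ^ 2 + d)).
  assert (HS : forall t, 0 < sqrt (t ^ 2 + d)) by (intros; apply sqrt_lt_R0; nra).
  assert (HS2 : forall t, sqrt (t ^ 2 + d) ^ 2 = t ^ 2 + d) by (intros; apply pow2_sqrt; nra).
  assert (HUc : forall t, cone true s (U t) t).
  { intros t. simpl. unfold U. replace (sgn s * (sgn s * sqrt (t ^ 2 + d))) with (sqrt (t ^ 2 + d))
      by (rewrite <- Rmult_assoc, SS; ring).
    apply Rlt_gt, sqrt_gt. apply Rabs_pos. replace (Rabs t ^ 2) with (t ^ 2) by (unfold Rabs; destruct Rcase_abs; ring); nra. }
  assert (HSp : sqrt (p ^ 2 + d) = sgn s * u).
  { replace (p ^ 2 + d) with ((sgn s * u) ^ 2) by (unfold d; rewrite Rpow_mult_distr; replace (sgn s ^ 2) with (sgn s * sgn s) by ring; rewrite SS; ring).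
    apply sqrt_sq_pos. lra. }
  assert (HUp : U p = u) by (unfold U; rewrite HSp, <- Rmult_assoc, SS; ring).
  set (G := fun t => h (U t) t - c * U t / d).
  set (dG := fun t => pu h (U t) t * (sgn s * t / sqrt (t ^ 2 + d)) + pp h (U t) t * 1
                      - c * (sgn s * t / sqrt (t ^ 2 + d)) / d).
  assert (HD : forall t, is_derive G t (dG t)).
  { intros t. 
    assert (D1 := chain2 (cone true s) h U (fun t => t) t (sgn s * t / sqrt (t ^ 2 + d)) 1 Hs
      (HUc t) (cone_open2 _ _ _ _ (HUc t)) (dsqrtp (sgn s) d t Hdp) (id_der t)).
    assert (D2 : is_derive (fun t => c * U t / d) t (c * (sgn s * t / sqrt (t ^ 2 + d)) / d)).
    { unfold U. auto_derive. nra. replace (t * (t * 1) + d) with (t ^ 2 + d) by ring. field. repeat split; pose proof (HS t); lra. }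
    exact (is_derive_minus _ _ _ _ _ D1 D2). }
  assert (HE : forall t, t * dG t = G t).
  { intros t. pose proof (HR (U t) t (HUc t)) as Rt. unfold Rexp in Rt.
    pose proof (HS t). pose proof (HS2 t).
    assert (E : t * dG t - G t =
      (- (U t * h (U t) t - t ^ 2 * pu h (U t) t - U t * t * pp h (U t) t - c)
       + c * (sqrt (t ^ 2 + d) ^ 2 - t ^ 2 - d) / d) / (sgn s * sqrt (t ^ 2 + d))).
    { unfold dG, G, U. destruct s; unfold sgn; field; split; lra. }
    rewrite Rt, (HS2 t) in E. 
    assert (Z : - (c - c) + c * (t ^ 2 + d - t ^ 2 - d) / d = 0) by (field; lra).
    rewrite Z in E. unfold Rdiv in E. rewrite Rmult_0_l in E. lra. }
  pose proof (lin_ode G dG HD HE p) as L.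
  unfold G in L. rewrite HUp in L. unfold h1form. fold d.
  assert (E1 : h u p = G p + c * u / d) by (unfold G; rewrite HUp; ring).
  unfold G in E1. rewrite HUp in E1. rewrite L in E1. rewrite E1. unfold U. ring.
- exists (fun d => h 0 (sgn s * sqrt (0 ^ 2 - d)) / (sgn s * sqrt (0 ^ 2 - d))).
  intros u p Hc. unfold cone in Hc. set (d := u ^ 2 - p ^ 2).
  assert (Hp : sgn s * p > 0) by (pose proof (Rabs_pos u); lra).
  assert (Hdp : d < 0) by (unfold d; unfold Rabs in Hc; destruct Rcase_abs; destruct s; simpl in *; nra).
  set (P := fun t => sgn s * sqrt (t ^ 2 - d)).
  assert (HS : forall t, 0 < sqrt (t ^ 2 - d)) by (intros; apply sqrt_lt_R0; nra).
  assert (HS2 : forall t, sqrt (t ^ 2 - d) ^ 2 = t ^ 2 - d) by (intros; apply pow2_sqrt; nra).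
  assert (HPc : forall t, cone false s t (P t)).
  { intros t. simpl. unfold P. replace (sgn s * (sgn s * sqrt (t ^ 2 - d))) with (sqrt (t ^ 2 - d))
      by (rewrite <- Rmult_assoc, SS; ring).
    apply Rlt_gt, sqrt_gt. apply Rabs_pos. replace (Rabs t ^ 2) with (t ^ 2) by (unfold Rabs; destruct Rcase_abs; ring); nra. }
  assert (HSu : sqrt (u ^ 2 - d) = sgn s * p).
  { replace (u ^ 2 - d) with ((sgn s * p) ^ 2) by (unfold d; rewrite Rpow_mult_distr; replace (sgn s ^ 2) with (sgn s * sgn s) by ring; rewrite SS; ring).
    apply sqrt_sq_pos. lra. }
  assert (HPu : P u = p) by (unfold P; rewrite HSu, <- Rmult_assoc, SS; ring).
  assert (HP0 : forall t, P t <> 0) by (intros t; unfold P; pose proof (HS t); destruct s; unfold sgn; lra).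
  set (g := fun t => h t (P t) - c * t / d).
  set (dg := fun t => pu h t (P t) * 1 + pp h t (P t) * (sgn s * t / sqrt (t ^ 2 - d)) - c / d).
  assert (HD : forall t, is_derive g t (dg t)).
  { intros t.
    assert (D1 := chain2 (cone false s) h (fun t => t) P t 1 (sgn s * t / sqrt (t ^ 2 - d)) Hs
      (HPc t) (cone_open2 _ _ _ _ (HPc t)) (id_der t) (dsqrtm (sgn s) d t Hdp)).
    assert (D2 : is_derive (fun t => c * t / d) t (c / d)).
    { auto_derive. auto. field. lra. }
    exact (is_derive_minus _ _ _ _ _ D1 D2). }
  assert (Hc0 : forall t, is_derive (fun t => g t / P t) t 0).
  { intros t.
    assert (N0 : dg t * P t - g t * (sgn s * t / sqrt (t ^ 2 - d)) = 0).
    { pose proof (HR t (P t) (HPc t)) as Rt. unfold Rexp in Rt.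
      pose proof (HS t). pose proof (HS2 t).
      assert (E : dg t * P t - g t * (sgn s * t / sqrt (t ^ 2 - d)) =
        (- (t * h t (P t) - P t ^ 2 * pu h t (P t) - t * P t * pp h t (P t) - c)
         - c * (sqrt (t ^ 2 - d) ^ 2 - t ^ 2 + d) / d) / (sgn s * sqrt (t ^ 2 - d))).
      { unfold dg, g, P. destruct s; unfold sgn; field; split; lra. }
      rewrite Rt, (HS2 t) in E. rewrite E. field; pose proof (HS t); repeat split; try lra; destruct s; unfold sgn; lra. }
    replace 0 with ((dg t * P t - g t * (sgn s * t / sqrt (t ^ 2 - d))) / (P t) ^ 2)
      by (rewrite N0; field; auto).
    apply is_derive_div; auto. apply dsqrtm; auto. }
  pose proof (seg0 (fun t => g t / P t) u 0 (fun t _ => Hc0 t)) as Q.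
  cbv beta in Q. unfold g in Q. rewrite HPu in Q.
  assert (p <> 0) by (intro Hp0; rewrite Hp0 in Hp; lra).
  unfold h1form. fold d.
  replace (h u p) with ((h u p - c * u / d) / p * p + c * u / d) by (field; split; lra).
  rewrite Q. unfold P. field. pose proof (HS 0). repeat split; try lra.
Qed.

Lemma cone_loc_u b s u p : cone b s u p -> locally u (fun t => cone b s t p).
Proof.
intros H. destruct (cone_open2 _ _ _ _ H) as [e He]. exists e. intros t Ht.
apply He. exact Ht. rewrite Rminus_eq_0, Rabs_R0. apply cond_pos.
Qed.
Lemma cone_loc_p b s u p : cone b s u p -> locally p (fun t => cone b s u t).
Proof.
intros H. destruct (cone_open2 _ _ _ _ H) as [e He]. exists e. intros t Ht.
apply He. rewrite Rminus_eq_0, Rabs_R0. apply cond_pos. exact Ht.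
Qed.

Lemma zero_pu b s f : (forall u p, cone b s u p -> f u p = 0) -> forall u p, cone b s u p -> pu f u p = 0.
Proof.
intros H u p Hc. unfold pu. rewrite (Derive_ext_loc _ (fun _ => 0)). apply Derive_const.
generalize (cone_loc_u b s u p Hc). apply filter_imp. intros t Ht. apply H; auto.
Qed.
Lemma zero_pp b s f : (forall u p, cone b s u p -> f u p = 0) -> forall u p, cone b s u p -> pp f u p = 0.
Proof.
intros H u p Hc. unfold pp. rewrite (Derive_ext_loc _ (fun _ => 0)). apply Derive_const.
generalize (cone_loc_p b s u p Hc). apply filter_imp. intros t Ht. apply H; auto.
Qed.

Lemma cont_zero (phi : R -> R) x : continuous phi x -> locally x (fun t => t <> x -> phi t = 0) -> phi x = 0.
Proof.
intros Hc Hl. destruct (Req_dec (phi x) 0) as [E|E]; auto. exfalso.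
assert (He : 0 < Rabs (phi x)) by (apply Rabs_pos_lt; auto).
assert (L : locally (phi x) (ball (phi x) (mkposreal _ He))) by apply locally_ball.
specialize (Hc _ L). unfold filtermap in Hc. destruct (filter_and _ _ Hc Hl) as [d Hd].
assert (Hd0 : 0 < d) by apply cond_pos.
destruct (Hd (x + d / 2)) as [H1 H2].
{ unfold ball; simpl; unfold AbsRing_ball, abs, minus, plus, opp; simpl.
  replace (x + d / 2 + - x) with (d / 2) by ring. rewrite Rabs_pos_eq; lra. }
rewrite H2 in H1 by lra. unfold ball in H1; simpl in H1; unfold AbsRing_ball, abs, minus, plus, opp in H1; simpl in H1.
replace (0 + - phi x) with (- phi x) in H1 by ring. rewrite Rabs_Ropp in H1. lra.
Qed.

Definition mk (u p w y : R) : jet := fun n =>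
  match n with 0%nat => u | 1%nat => p | 2%nat => w | 4%nat => y | _ => 0 end.

Lemma Ef_y h1 h2 h3 u p w : Ef h1 h2 h3 (mk u p w 1) - Ef h1 h2 h3 (mk u p w 0) = 2 * h2 u p + 6 * h3 u p * (u - w).
Proof.
unfold Ef, P0f, T1f, T2f, pol, dpol, ddpol, dddpol. cbv beta iota delta [mk]. ring.
Qed.

Lemma Ef_red h1 h2 h3 (j : jet) : let u := j 0%nat in let p := j 1%nat in
  h2 u p = 0 -> pu h2 u p = 0 -> pp h2 u p = 0 -> pu (pu h2) u p = 0 -> pp (pu h2) u p = 0 ->
  pu (pp h2) u p = 0 -> pp (pp h2) u p = 0 ->
  h3 u p = 0 -> pu h3 u p = 0 -> pp h3 u p = 0 -> pu (pu h3) u p = 0 -> pp (pu h3) u p = 0 ->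
  pu (pp h3) u p = 0 -> pp (pp h3) u p = 0 ->
  Ef h1 h2 h3 j = - j 2%nat * Aexp h1 u p + Bexp h1 u p.
Proof.
intros u p. intros. unfold Ef, P0f, T1f, T2f, pol, dpol, ddpol, dddpol, Aexp, Bexp. fold u p.
repeat match goal with H : _ = 0 |- _ => rewrite H; clear H end. ring.
Qed.

Lemma zeros b s f : (forall u p, cone b s u p -> f u p = 0) -> forall u p, cone b s u p ->
  f u p = 0 /\ pu f u p = 0 /\ pp f u p = 0 /\ pu (pu f) u p = 0 /\ pp (pu f) u p = 0 /\
  pu (pp f) u p = 0 /\ pp (pp f) u p = 0.
Proof.
intros H u p Hc.
assert (H1 := zero_pu b s f H). assert (H2 := zero_pp b s f H).
repeat split; auto.
apply (zero_pu b s (pu f)); auto. apply (zero_pp b s (pu f)); auto.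
apply (zero_pu b s (pp f)); auto. apply (zero_pp b s (pp f)); auto.
Qed.

Lemma part1 b s h1 h2 h3 :
      smooth_on (cone b s) h1 -> smooth_on (cone b s) h2 ->
      smooth_on (cone b s) h3 ->
      ((forall (x : R) (j : jet), cone b s (j 0%nat) (j 1%nat) ->
          Euler (kfun h1 h2 h3) x j = 0)
       <->
       ((exists (k1 : R -> R) (k0 : R),
            forall u p, cone b s u p -> h1 u p = h1form k1 k0 u p)
        /\ (forall u p, cone b s u p -> h2 u p = 0 /\ h3 u p = 0))).
Proof.
intros S1 S2 S3. split.
- intros HE.
  assert (HEf : forall u p w y, cone b s u p -> Ef h1 h2 h3 (mk u p w y) = 0).
  { intros u p w y Hc. rewrite <- (Euler_ok b s h1 h2 h3 S1 S2 S3 0 (mk u p w y)) by exact Hc.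
    apply HE. exact Hc. }
  assert (H23 : forall u p, cone b s u p -> h2 u p = 0 /\ h3 u p = 0).
  { intros u p Hc. pose proof (Ef_y h1 h2 h3 u p u) as E1. pose proof (Ef_y h1 h2 h3 u p (u - 1)) as E2.
    rewrite !HEf in E1, E2 by exact Hc.
    replace (u - u) with 0 in E1 by ring. replace (u - (u - 1)) with 1 in E2 by ring. lra. }
  assert (AB : forall u p, cone b s u p -> Aexp h1 u p = 0 /\ Bexp h1 u p = 0).
  { intros u p Hc.
    destruct (zeros b s h2 (fun u p H => proj1 (H23 u p H)) u p Hc) as (Z1 & Z2 & Z3 & Z4 & Z5 & Z6 & Z7).
    destruct (zeros b s h3 (fun u p H => proj2 (H23 u p H)) u p Hc) as (Y1 & Y2 & Y3 & Y4 & Y5 & Y6 & Y7).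
    pose proof (Ef_red h1 h2 h3 (mk u p 0 0)) as E1. pose proof (Ef_red h1 h2 h3 (mk u p 1 0)) as E2.
    rewrite HEf in E1, E2 by exact Hc.
    cbv beta iota zeta delta [mk] in E1, E2.
    specialize (E1 Z1 Z2 Z3 Z4 Z5 Z6 Z7 Y1 Y2 Y3 Y4 Y5 Y6 Y7).
    specialize (E2 Z1 Z2 Z3 Z4 Z5 Z6 Z7 Y1 Y2 Y3 Y4 Y5 Y6 Y7). lra. }
  assert (Hbase : exists u0 p0, cone b s u0 p0).
  { destruct b; [exists (sgn s), 0 | exists 0, (sgn s)]; unfold cone; rewrite Rabs_R0; destruct s; unfold sgn; lra. }
  destruct Hbase as [u0 [p0 H0]].
  destruct (form_of_R b s h1 (Rexp h1 u0 p0) S1 (fun u p Hc => R_const b s h1 S1 AB u p u0 p0 Hc H0)) as [k1 Hk].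
  split; auto. exists k1, (Rexp h1 u0 p0). auto.
- intros [[k1 [k0 Hf]] H23] x j Hc.
  pose proof (R_of_form b s h1 k1 k0 S1 Hf) as RK.
  assert (HB : forall u p, cone b s u p -> Bexp h1 u p = 0).
  { intros u p Hc'. rewrite <- (is_derive_unique _ _ _ (dRu b s h1 S1 u p Hc')).
    rewrite (Derive_ext_loc _ (fun _ => k0)). apply Derive_const.
    generalize (cone_loc_u b s u p Hc'). apply filter_imp. intros t Ht. apply RK; auto. }
  assert (HpA : forall u p, cone b s u p -> p * Aexp h1 u p = 0).
  { intros u p Hc'. 
    assert (E : - p * Aexp h1 u p = 0).
    { rewrite <- (is_derive_unique _ _ _ (dRp b s h1 S1 u p Hc')).
      rewrite (Derive_ext_loc _ (fun _ => k0)). apply Derive_const.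
      generalize (cone_loc_p b s u p Hc'). apply filter_imp. intros t Ht. apply RK; auto. }
    lra. }
  assert (HA : forall u p, cone b s u p -> Aexp h1 u p = 0).
  { intros u p Hc'. destruct (Req_dec p 0) as [P0|P0].
    2: { specialize (HpA u p Hc'). apply (Rmult_eq_reg_l p). lra. auto. }
    apply (cont_zero (fun t => Aexp h1 u t) p).
    - apply (@ex_derive_continuous R_AbsRing R_NormedModule). unfold Aexp. auto_derive. repeat split.
      + exact (proj1 (proj2 (S1 (true::nil) u p Hc'))).
      + exact (proj1 (proj2 (S1 (false::false::nil) u p Hc'))).
      + exact (proj1 (proj2 (S1 (false::true::nil) u p Hc'))).
    - generalize (cone_loc_p b s u p Hc'). apply filter_imp. intros t Ht Htp.
      specialize (HpA u t Ht). apply (Rmult_eq_reg_l t). lra. lra. }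
  rewrite (Euler_ok b s h1 h2 h3 S1 S2 S3 x j Hc).
  destruct (zeros b s h2 (fun u p H => proj1 (H23 u p H)) _ _ Hc) as (Z1 & Z2 & Z3 & Z4 & Z5 & Z6 & Z7).
  destruct (zeros b s h3 (fun u p H => proj2 (H23 u p H)) _ _ Hc) as (Y1 & Y2 & Y3 & Y4 & Y5 & Y6 & Y7).
  rewrite (Ef_red h1 h2 h3 j Z1 Z2 Z3 Z4 Z5 Z6 Z7 Y1 Y2 Y3 Y4 Y5 Y6 Y7).
  rewrite HA, HB by exact Hc. ring.
Qed.

Lemma indep_pot K1 k0 : indep 2 (potential K1 k0).
Proof. intros x j j' H. unfold potential. rewrite !H by lia. reflexivity. Qed.

Lemma cone_nz b s u p : cone b s u p -> u - p <> 0 /\ u + p <> 0.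
Proof. destruct b; unfold cone; unfold Rabs; destruct Rcase_abs; destruct s; unfold sgn; lra. Qed.

Lemma part2 b s k1 K1 k0 :
  (forall u p, cone b s u p -> is_derive K1 (u ^ 2 - p ^ 2) (k1 (u ^ 2 - p ^ 2))) ->
  forall (x : R) (j : jet), cone b s (j 0%nat) (j 1%nat) ->
    kfun (h1form k1 k0) (fun _ _ => 0) (fun _ _ => 0) x j = TotD (potential K1 k0) x j.
Proof.
intros HK x j Hc. unfold TotD.
rewrite series4.
2: { intros i Hi. rewrite (pjet_zero 2 _ i x j (indep_pot K1 k0)) by lia. ring. }
rewrite (pjet_zero 2 _ 2 x j (indep_pot K1 k0)) by lia.
rewrite (pjet_zero 2 _ 3 x j (indep_pot K1 k0)) by lia.
assert (Px : px (potential K1 k0) x j = k0).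
{ unfold px, potential. apply is_derive_unique. auto_derive. auto. ring. }
rewrite Px.
unfold pjet, potential, kfun, h1form. cbv beta iota delta [upd Nat.eqb].
revert Hc. generalize (j 0%nat) (j 1%nat) (j 2%nat) (j 3%nat). intros u p w z Hc.
destruct (cone_nz b s u p Hc) as [N1 N2].
assert (Hd : u ^ 2 - p ^ 2 <> 0) by (intro; apply N1; nra).
assert (HKu := HK u p Hc).
assert (Hy : (u + - p) * / (u + p) <> 0) by (apply Rmult_integral_contrapositive; split; [lra | apply Rinv_neq_0_compat; auto]).
assert (E0 : Derive (fun t => / 2 * K1 (t ^ 2 - p ^ 2) + / 2 * k0 * ln (Rabs ((t - p) / (t + p))) + k0 * x) u
   = u * k1 (u ^ 2 - p ^ 2) + k0 * p / (u ^ 2 - p ^ 2)).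
{ apply is_derive_unique. auto_derive.
  - replace (u * (u * 1) + - (p * (p * 1))) with (u ^ 2 - p ^ 2) by ring.
    repeat split; auto. eexists; exact HKu. apply Rabs_pos_lt; auto.
  - replace (u * (u * 1) + - (p * (p * 1))) with (u ^ 2 - p ^ 2) by ring.
    replace (Derive (fun x0 : R => K1 x0) (u ^ 2 - p ^ 2)) with (k1 (u ^ 2 - p ^ 2)) by (symmetry; apply is_derive_unique; exact HKu).
    destruct (Rlt_dec ((u + - p) * / (u + p)) 0) as [L|L].
    + rewrite sign_eq_m1, Rabs_left by auto. field. repeat split; auto. 
    + rewrite sign_eq_1, Rabs_right by lra. field. repeat split; auto. }
assert (E1 : Derive (fun t => / 2 * K1 (u ^ 2 - t ^ 2) + / 2 * k0 * ln (Rabs ((u - t) / (u + t))) + k0 * x) p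
   = - p * k1 (u ^ 2 - p ^ 2) - k0 * u / (u ^ 2 - p ^ 2)).
{ apply is_derive_unique. auto_derive.
  - replace (u * (u * 1) + - (p * (p * 1))) with (u ^ 2 - p ^ 2) by ring.
    repeat split; auto. eexists; exact HKu. apply Rabs_pos_lt; auto.
  - replace (u * (u * 1) + - (p * (p * 1))) with (u ^ 2 - p ^ 2) by ring.
    replace (Derive (fun x0 : R => K1 x0) (u ^ 2 - p ^ 2)) with (k1 (u ^ 2 - p ^ 2)) by (symmetry; apply is_derive_unique; exact HKu).
    destruct (Rlt_dec ((u + - p) * / (u + p)) 0) as [L|L].
    + rewrite sign_eq_m1, Rabs_left by auto. field. repeat split; auto. 
    + rewrite sign_eq_1, Rabs_right by lra. field. repeat split; auto. }
rewrite E0, E1. field. auto.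
Qed.

Theorem lemma3 :
  (forall (b s : bool) (h1 h2 h3 : R -> R -> R),
      smooth_on (cone b s) h1 -> smooth_on (cone b s) h2 ->
      smooth_on (cone b s) h3 ->
      ((forall (x : R) (j : jet), cone b s (j 0%nat) (j 1%nat) ->
          Euler (kfun h1 h2 h3) x j = 0)
       <->
       ((exists (k1 : R -> R) (k0 : R),
            forall u p, cone b s u p -> h1 u p = h1form k1 k0 u p)
        /\ (forall u p, cone b s u p -> h2 u p = 0 /\ h3 u p = 0))))
  /\
  (forall (b s : bool) (k1 K1 : R -> R) (k0 : R),
      (forall u p, cone b s u p ->
         is_derive K1 (u ^ 2 - p ^ 2) (k1 (u ^ 2 - p ^ 2))) ->
      forall (x : R) (j : jet), cone b s (j 0%nat) (j 1%nat) ->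
        kfun (h1form k1 k0) (fun _ _ => 0) (fun _ _ => 0) x j
        = TotD (potential K1 k0) x j).

Proof.
split.
- intros b s h1 h2 h3 S1 S2 S3. apply part1; auto.
- intros b s k1 K1 k0 HK x j Hc. apply (part2 b s k1 K1 k0 HK x j Hc).
Qed.
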